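(* Let $X$ be a connected finite $T_0$-space and let $x_0,x\in X$ with $x_0\neq x$, such that $x$ is neither a maximal nor a minimal element of $X$. Then the inclusion of simplicial complexes $\mathcal{K}(X\smallsetminus\{x\})\subseteq\mathcal{K}(X)$ induces an epimorphism $i_*:E(\mathcal{K}(X\smallsetminus\{x\}),x_0)\to E(\mathcal{K}(X),x_0)$ of edge-path groups.
   Context: Finite $T_0$-spaces are identified with finite posets via $x\le y$ iff $x$ lies in every open set containing $y$. For a finite poset $P$, $\mathcal{K}(P)$ is the simplicial complex whose simplices are the nonempty chains of $P$. $E(K,v)$ denotes the edge-path group of a simplicial complex $K$ with base vertex $v$. *)

(* Defs.v *)
From mathcomp Require Import all_boot.
Set Implicit Arguments. Unset Strict Implicit. Unset Printing Implicit Defensive.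

(* A finite T0-space is a finite type T with a partial order [le]
   (x <= y iff x lies in every open set containing y).  The open sets of the
   corresponding topology are then exactly the down-sets. *)
Definition partial_order (T : finType) (le : rel T) : Prop :=
  [/\ reflexive le, antisymmetric le & transitive le].

Definition is_open (T : finType) (le : rel T) (U : {set T}) : bool :=
  [forall a, forall b, ((b \in U) && le a b) ==> (a \in U)].

Definition connected_space (T : finType) (le : rel T) : Prop :=
  (exists a : T, True) /\
  forall U : {set T}, is_open le U -> is_open le (~: U) -> U = set0 \/ U = setT.

Definition maximal_elt (T : finType) (le : rel T) (a : T) : Prop :=
  forall b, le a b -> b = a.
Definition minimal_elt (T : finType) (le : rel T) (a : T) : Prop :=
  forall b, le b a -> b = a.

Definition complex (V : finType) := {set V} -> bool.

(* K(S): the order complex of the subposet S of (T, le): simplices are the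
   nonempty chains contained in S. *)
Definition order_complex (T : finType) (le : rel T) (S : {set T}) : complex T :=
  fun A => [&& A != set0, A \subset S &
               [forall a in A, forall b in A, le a b || le b a]].

(* An edge path is a nonempty sequence of vertices v0 v1 ... vn such that
   each {v_i, v_(i+1)} is a simplex (v_i = v_(i+1) allowed). *)
Definition edge_path (V : finType) (K : complex V) (p : seq V) : bool :=
  if p is v :: s then K [set v] && path (fun a b => K [set a; b]) v s
  else false.

Definition edge_loop (V : finType) (K : complex V) (v : V) (p : seq V) : bool :=
  if p is u :: s then [&& u == v, last u s == v & edge_path K p] else false.

(* Equivalence of edge paths (Spanier): generated by
   ... u v w ... ~ ... u w ...  whenever {u,v,w} is a simplex,
   and ... u u ... ~ ... u ... . *)
Inductive ep_equiv (V : finType) (K : complex V) : seq V -> seq V -> Prop :=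
| ep_refl p : ep_equiv K p p
| ep_sym p q : ep_equiv K p q -> ep_equiv K q p
| ep_trans p q r : ep_equiv K p q -> ep_equiv K q r -> ep_equiv K p r
| ep_tri p q u v w : K [set u; v; w] ->
    ep_equiv K (p ++ [:: u; v; w] ++ q) (p ++ [:: u; w] ++ q)
| ep_dup p q u : K [set u] ->
    ep_equiv K (p ++ [:: u; u] ++ q) (p ++ [:: u] ++ q).

(* E(K, v) is the set of edge loops at v modulo ep_equiv (a group under
   concatenation).  For a subcomplex L of K the inclusion induces
   i_* : E(L, v) -> E(K, v), [p] |-> [p]; it is an epimorphism iff every
   class of E(K, v) contains a loop of L. *)
Definition incl_edge_group_epi (V : finType) (L K : complex V) (v : V) : Prop :=
  forall p, edge_loop K v p ->
    exists2 q, edge_loop L v q & ep_equiv K p q.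

(* Main.v *)
Require Import Defs.
From mathcomp Require Import all_boot.
Set Implicit Arguments. Unset Strict Implicit. Unset Printing Implicit Defensive.

Definition compa (T : finType) (le : rel T) (a b : T) := le a b || le b a.

Lemma oc_single (T : finType) (le : rel T) (S : {set T}) a :
  reflexive le -> order_complex le S [set a] = (a \in S).
Proof.
move=> refl; rewrite /order_complex.
apply/idP/idP.
- case/and3P=> _ sub _. by apply: (subsetP sub); rewrite inE.
- move=> aS; apply/and3P; split.
  + by apply/set0Pn; exists a; rewrite !inE eqxx.
  + by apply/subsetP=> c; rewrite !inE => /eqP ->.
  + apply/forallP=> c; apply/implyP; rewrite !inE => /eqP ->.
    apply/forallP=> d; apply/implyP; rewrite !inE => /eqP ->.
    by rewrite refl.
Qed.

Lemma oc_pair (T : finType) (le : rel T) (S : {set T}) a b :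
  reflexive le ->
  order_complex le S [set a; b] = [&& a \in S, b \in S & compa le a b].
Proof.
move=> refl; rewrite /order_complex.
apply/idP/idP.
- case/and3P=> _ sub /forallP H.
  have ha : a \in [set a; b] by rewrite !inE eqxx.
  have hb : b \in [set a; b] by rewrite !inE eqxx orbT.
  rewrite (subsetP sub _ ha) (subsetP sub _ hb) /=.
  by move: (H a) => /implyP /(_ ha) /forallP /(_ b) /implyP /(_ hb).
- case/and3P=> aS bS cab. apply/and3P; split.
  + by apply/set0Pn; exists a; rewrite !inE eqxx.
  + by apply/subsetP=> c; rewrite !inE => /orP [] /eqP ->.
  + rewrite /compa in cab.
    apply/forallP=> c; apply/implyP; rewrite !inE => /orP [] /eqP ->;
    apply/forallP=> d; apply/implyP; rewrite !inE => /orP [] /eqP ->;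
    first [by rewrite refl | by [] | by rewrite orbC].
Qed.

Lemma oc_triple (T : finType) (le : rel T) (S : {set T}) a b c :
  reflexive le -> a \in S -> b \in S -> c \in S ->
  compa le a b -> compa le b c -> compa le a c ->
  order_complex le S [set a; b; c].
Proof.
move=> refl aS bS cS hab hbc hac; rewrite /order_complex /compa in hab hbc hac *.
apply/and3P; split.
+ by apply/set0Pn; exists a; rewrite !inE eqxx.
+ by apply/subsetP=> d; rewrite !inE => /orP [/orP [] | ] /eqP ->.
+ apply/forallP=> d; apply/implyP; rewrite !inE => /orP [/orP [] | ] /eqP ->;
  apply/forallP=> e; apply/implyP; rewrite !inE => /orP [/orP [] | ] /eqP ->;
  first [by rewrite refl | by [] | by rewrite orbC].
Qed.

Lemma ep_cat (V : finType) (K : complex V) p q a b :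
  ep_equiv K p q -> ep_equiv K (a ++ p ++ b) (a ++ q ++ b).
Proof.
elim=> {p q}.
- by move=> p; apply: ep_refl.
- by move=> p q _ H; apply: ep_sym.
- by move=> p q r _ H1 _ H2; apply: ep_trans H2.
- move=> p q u v w H.
  have := ep_tri (a ++ p) (q ++ b) H.
  by rewrite -!catA /=.
- move=> p q u H.
  have := ep_dup (a ++ p) (q ++ b) H.
  by rewrite -!catA /=.
Qed.

Lemma bypass (T : finType) (le : rel T) (hpo : partial_order le)
  x y z (hy : le x y) (yx : y != x) (hz : le z x) (zx : z != x) v w :
  v != x -> w != x -> compa le v x -> compa le x w ->
  exists c, [/\ c != x, compa le v c, compa le c w &
     ep_equiv (order_complex le setT) [:: v; x; w] [:: v; c; w]].
Proof.
case: hpo => refl anti tr.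
have cs : forall a b, compa le a b -> compa le b a by move=> a b; rewrite /compa orbC.
have cr : forall a, compa le a a by move=> a; rewrite /compa refl.
have I : forall a : T, a \in [set: T] by move=> a; rewrite inE.
move=> vx wx; rewrite {1}/compa => /orP [] hv; rewrite /compa => /orP [] hw.
-
  have vw : compa le v w by rewrite /compa (tr x v w hv hw).
  have cvx : compa le v x by rewrite /compa hv.
  have cxw : compa le x w by rewrite /compa hw.
  exists v; split => //; first exact: cr.
  apply: (@ep_trans _ _ _ [:: v; w]).
  + exact: (ep_tri [::] [::] (oc_triple refl (I v) (I x) (I w) cvx cxw vw)).
  + apply: ep_sym.
    exact: (ep_tri [::] [::] (oc_triple refl (I v) (I v) (I w) (cr v) vw vw)).
- (* v <= x, w <= x : use y *)
  have cvx : compa le v x by rewrite /compa hv.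
  have cxw : compa le x w by rewrite /compa hw orbT.
  have vy : compa le v y by rewrite /compa (tr x v y hv hy).
  have yw : compa le y w by rewrite /compa (tr x w y hw hy) orbT.
  have cyx : compa le y x by rewrite /compa hy orbT.
  exists y; split => //.
  apply: (@ep_trans _ _ _ [:: v; y; x; w]).
  + apply: ep_sym.
    exact: (ep_tri [::] [:: w] (oc_triple refl (I v) (I y) (I x) vy cyx cvx)).
  + exact: (ep_tri [:: v] [::] (oc_triple refl (I y) (I x) (I w) cyx cxw yw)).
- (* x <= v, x <= w : use z *)
  have cvx : compa le v x by rewrite /compa hv orbT.
  have cxw : compa le x w by rewrite /compa hw.
  have vz : compa le v z by rewrite /compa (tr x z v hz hv) orbT.
  have zw : compa le z w by rewrite /compa (tr x z w hz hw).
  have czx : compa le z x by rewrite /compa hz.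
  exists z; split => //.
  apply: (@ep_trans _ _ _ [:: v; z; x; w]).
  + apply: ep_sym.
    exact: (ep_tri [::] [:: w] (oc_triple refl (I v) (I z) (I x) vz czx cvx)).
  + exact: (ep_tri [:: v] [::] (oc_triple refl (I z) (I x) (I w) czx cxw zw)).
-
  have vw : compa le v w by rewrite /compa (tr x w v hw hv) orbT.
  have cvx : compa le v x by rewrite /compa hv orbT.
  have cxw : compa le x w by rewrite /compa hw orbT.
  exists v; split => //; first exact: cr.
  apply: (@ep_trans _ _ _ [:: v; w]).
  + exact: (ep_tri [::] [::] (oc_triple refl (I v) (I x) (I w) cvx cxw vw)).
  + apply: ep_sym.
    exact: (ep_tri [::] [::] (oc_triple refl (I v) (I v) (I w) (cr v) vw vw)).
Qed.

Lemma claim (T : finType) (le : rel T) (hpo : partial_order le)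
  x y z (hy : le x y) (yx : y != x) (hz : le z x) (zx : z != x) n :
  forall s v, size s < n -> v != x -> last v s != x ->
  edge_path (order_complex le setT) (v :: s) ->
  exists t, [/\ edge_path (order_complex le (setT :\ x)) (v :: t),
     last v t = last v s &
     ep_equiv (order_complex le setT) (v :: s) (v :: t)].
Proof.
have refl : reflexive le by case: hpo.
have I : forall a : T, a \in [set: T] by move=> a; rewrite inE.
elim: n => [|n IH] s v //.
move=> hs hv hl hp.
case: s hs hl hp => [|a s] hs hl hp.
- exists [::]; split => //; last exact: ep_refl.
  by rewrite /= oc_single // !inE hv.
case: (eqVneq a x) => [ax | ax].
- subst a. case: s hs hl hp => [|b s] hs hl hp.
  + by rewrite /= eqxx in hl.
  case: (eqVneq b x) => [bx | bx].
  + subst b.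
    have sx : order_complex le setT [set x] by rewrite oc_single // inE.
    have e1 := ep_dup [:: v] s sx.
    case: (IH (x :: s) v) => //.
    * by move: hp => /= /and4P [-> -> _ ->].
    move=> t [ht hlt he]; exists t; split => //.
    exact: ep_trans e1 he.
  + move: hp => /= /and4P [hpv]; rewrite oc_pair // => /and3P [_ _ cvx].
    rewrite oc_pair // => /and3P [_ _ cxb] hps.
    have [c [cx cvc ccb ec]] := bypass hpo hy yx hz zx hv bx cvx cxb.
    case: (IH s b) => //.
    * by move: hs; rewrite /= !ltnS => /ltnW.
    * by rewrite /= oc_single // inE.
    move=> t [ht hlt he]; exists (c :: b :: t); split => //.
    * move: ht => /= /andP [hb ->].
      by rewrite !oc_pair // oc_single // !inE hv cx bx cvc ccb.
    * apply: (@ep_trans _ _ _ (v :: c :: b :: s)).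
        exact: (ep_cat [::] s ec).
      have := ep_cat [:: v; c] [::] he.
      by rewrite !cats0.
- move: hp => /= /and3P [hpv]; rewrite oc_pair // => /and3P [_ _ cva] hps.
  case: (IH s a) => //.
  + by rewrite /= oc_single // inE.
  move=> t [ht hlt he]; exists (a :: t); split => //.
  + move: ht => /= /andP [ha ->].
    by rewrite !oc_pair // oc_single // !inE hv ax cva.
  + have := ep_cat [:: v] [::] he.
    by rewrite !cats0.
Qed.

Theorem mainTheorem13 (T : finType) (le : rel T)
  (hpo : partial_order le) (hconn : connected_space le)
  (x0 x : T) (hne : x0 != x)
  (hnmax : ~ maximal_elt le x) (hnmin : ~ minimal_elt le x) :
  incl_edge_group_epi (order_complex le (setT :\ x)) (order_complex le setT) x0.
Proof.
have [y /andP [hy yx] | H] := pickP (fun b => le x b && (b != x)); last first.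
  by exfalso; apply: hnmax => b hb; move: (H b); rewrite hb /= => /negbFE /eqP.
have [z /andP [hz zx] | H] := pickP (fun b => le b x && (b != x)); last first.
  by exfalso; apply: hnmin => b hb; move: (H b); rewrite hb /= => /negbFE /eqP.
move=> [//|u s] /= /and3P [/eqP hu /eqP hl hp]; subst u.
have hl' : last x0 s != x by rewrite hl.
have [t [ht hlt he]] := claim hpo hy yx hz zx (ltnSn (size s)) hne hl' hp.
exists (x0 :: t) => //.
by rewrite /edge_loop eqxx hlt hl eqxx ht.
Qed.
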